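(* Let $1\le p\le n$, $\beta>0$, and $X\in\mathbb{R}^{n\times p}_*$. Let $\mathrm{St}_{X^\top X}=\{Y\in\mathbb{R}^{n\times p}\mid Y^\top Y=X^\top X\}$, whose tangent space at $X$ is $\mathrm{T}_X\mathrm{St}_{X^\top X}=\{\xi\in\mathbb{R}^{n\times p}\mid \xi^\top X+X^\top\xi=0\}$. Define the normal space of $\mathrm{St}_{X^\top X}$ at $X$ with respect to $g^\beta$ as \[\mathrm{N}^\beta_X\mathrm{St}_{X^\top X}=\{U\in\mathbb{R}^{n\times p}\mid g^\beta_X(U,\xi)=0\text{ for all }\xi\in\mathrm{T}_X\mathrm{St}_{X^\top X}\}.\] Then \[\mathrm{N}^\beta_X\mathrm{St}_{X^\top X}=\{X(X^\top X)^{-1}S\mid S\in\mathrm{Sym}(p)\}.\]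
   Context: $\mathbb{R}^{n\times p}_*$ denotes the set of full-rank (rank $p$) real $n\times p$ matrices; $\mathrm{Sym}(p)$ is the set of real symmetric $p\times p$ matrices. For $\beta>0$ and $X\in\mathbb{R}^{n\times p}_*$, the $\beta$-metric is the inner product on $\mathbb{R}^{n\times p}$ given by \[g^\beta_X(\xi,\zeta)=\mathrm{trace}\Big(\xi^\top\big(\mathrm{I}_n-(1-\beta)X(X^\top X)^{-1}X^\top\big)\zeta\,(X^\top X)^{-1}\Big),\qquad \xi,\zeta\in\mathbb{R}^{n\times p}.\] *)

(* Defs.v *)
From mathcomp Require Import all_boot all_order all_algebra.
Set Implicit Arguments. Unset Strict Implicit. Unset Printing Implicit Defensive.
Import Order.TTheory GRing.Theory Num.Theory.
Local Open Scope ring_scope.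

Definition beta_metric (R : realFieldType) (n p : nat) (beta : R)
    (X xi zeta : 'M[R]_(n, p)) : R :=
  let G := invmx (X^T *m X) in
  \tr (xi^T *m (1%:M - (1 - beta) *: (X *m G *m X^T)) *m zeta *m G).

Definition tangent_St (R : realFieldType) (n p : nat) (X xi : 'M[R]_(n, p)) : Prop :=
  xi^T *m X + X^T *m xi = 0.

Definition normal_St (R : realFieldType) (n p : nat) (beta : R)
    (X U : 'M[R]_(n, p)) : Prop :=
  forall xi : 'M[R]_(n, p), tangent_St X xi -> beta_metric beta X U xi = 0.

(* Main.v *)
Require Import Defs.
From mathcomp Require Import all_boot all_order all_algebra.
Set Implicit Arguments. Unset Strict Implicit. Unset Printing Implicit Defensive.
Import Order.TTheory GRing.Theory Num.Theory.
Local Open Scope ring_scope.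
Local Open Scope ring_scope.
Lemma tr_delta (R : comNzRingType) m n (A : 'M[R]_(m, n)) i j :
  \tr (A *m delta_mx i j) = A j i.
Proof.
rewrite /mxtrace (bigD1 j) //= big1 ?addr0.
  rewrite mxE (bigD1 i) //= big1 ?addr0; first by rewrite mxE !eqxx mulr1.
  by move=> k /negbTE kn; rewrite mxE kn mulr0.
move=> k /negbTE kn; rewrite mxE big1 // => l _; rewrite mxE kn andbF mulr0 //.
Qed.

Lemma tr_eq0 (R : comNzRingType) m n (A : 'M[R]_(m, n)) :
  (forall Z, \tr (A *m Z) = 0) -> A = 0.
Proof.
move=> H; apply/matrixP => j i; rewrite mxE -(tr_delta A i j); exact: H.
Qed.

Lemma rv_sq0 (R : realFieldType) n (u : 'rV[R]_n) : u *m u^T = 0 -> u = 0.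
Proof.
move/matrixP => /(_ 0 0); rewrite !mxE.
under eq_bigr do rewrite mxE -expr2.
move/eqP; rewrite psumr_eq0; last by move=> k _; rewrite sqr_ge0.
move/allP => Hk; apply/matrixP => a k; rewrite (ord1 a) mxE.
by have := Hk k (mem_index_enum _); rewrite implyTb sqrf_eq0 => /eqP.
Qed.

Lemma gram_unit (R : realFieldType) n p (X : 'M[R]_(n, p)) :
  \rank X = p -> X^T *m X \in unitmx.
Proof.
move=> rX; rewrite -row_free_unit; apply: inj_row_free => v.
rewrite mulmxA => Hv.
have fr : row_free X^T by rewrite -row_leq_rank mxrank_tr rX.
apply/eqP; rewrite -(mulmx_free_eq0 _ fr); apply/eqP.
by apply: rv_sq0; rewrite trmx_mul trmxK mulmxA Hv mul0mx.
Qed.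

Lemma keyM (R : realFieldType) n p (beta : R) (X : 'M[R]_(n, p)) (Gi S : 'M[R]_p) :
  Gi^T = Gi -> X^T *m X *m Gi = 1%:M ->
  (X *m Gi *m S)^T *m (1%:M - (1 - beta) *: (X *m Gi *m X^T))
  = beta *: (S^T *m Gi *m X^T).
Proof.
move=> GiT GG.
rewrite !trmx_mul GiT mulmxBr mulmx1 -scalemxAr.
have -> : S^T *m (Gi *m X^T) *m (X *m Gi *m X^T) = S^T *m Gi *m X^T.
  by rewrite !mulmxA -(mulmxA _ X^T X) -(mulmxA _ (X^T *m X)) GG mulmx1.
by rewrite -mulmxA scalerBl scale1r opprB addrC subrK.
Qed.
Theorem proposition3 (R : realFieldType) (n p : nat) (beta : R)
    (X : 'M[R]_(n, p)) :
  (1 <= p)%N -> (p <= n)%N -> 0 < beta -> \rank X = p ->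
  forall U : 'M[R]_(n, p),
    normal_St beta X U <->
    exists S : 'M[R]_p, S^T = S /\ U = X *m invmx (X^T *m X) *m S.
Proof.
move=> _ _ bpos rX U.
have Gu := gram_unit rX.
set G := X^T *m X in Gu *.
set Gi := invmx G.
have GT : G^T = G by rewrite /G trmx_mul trmxK.
have GiT : Gi^T = Gi by rewrite /Gi trmx_inv GT.
have GGi : G *m Gi = 1%:M by rewrite /Gi mulmxV.
have GiG : Gi *m G = 1%:M by rewrite /Gi mulVmx.
have b0 : beta != 0 by rewrite gt_eqF.
rewrite /normal_St /beta_metric -/G -/Gi.
split.
- move=> H.
  set P := X *m Gi *m X^T.
  have PT : P^T = P by rewrite /P !trmx_mul trmxK GiT mulmxA.
  have XP : X^T *m P = X^T by rewrite /P !mulmxA -/G GGi mul1mx.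
  have PX : P *m X = X by rewrite /P -!mulmxA -/G GiG mulmx1.
  have PP : P *m P = P by rewrite {1}/P -mulmxA XP.
  have U1 : (1%:M - P) *m U = 0.
    have K : Gi *m U^T *m (1%:M - P) = 0.
      apply: tr_eq0 => Z.
      have := H ((1%:M - P) *m Z).
      have tg : tangent_St X ((1%:M - P) *m Z).
        rewrite /tangent_St trmx_mul linearB /= trmx1 PT.
        by rewrite -mulmxA mulmxBl mul1mx PX subrr mulmx0 mulmxA mulmxBr mulmx1 XP subrr mul0mx addr0.
      move/(_ tg); rewrite -(mulmxA U^T).
      have -> : (1%:M - (1 - beta) *: P) *m ((1%:M - P) *m Z) = (1%:M - P) *m Z.
        by rewrite mulmxA mulmxBl mul1mx -scalemxAl mulmxBr mulmx1 PP subrr scaler0 subr0.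
      by rewrite mulmxA mxtrace_mulC !mulmxA.
    have : G *m (Gi *m U^T *m (1%:M - P)) = 0 by rewrite K mulmx0.
    rewrite !mulmxA GGi mul1mx => /(congr1 trmx).
    by rewrite trmx_mul linearB /= trmx1 PT trmxK trmx0.
  have UE : U = X *m Gi *m (X^T *m U).
    by apply/eqP; rewrite mulmxA -/P -subr_eq0 -{1}(mul1mx U) -mulmxBl U1.
  exists (X^T *m U); split=> //.
  set S := X^T *m U in UE *.
  set B := Gi *m S^T *m Gi.
  have HB : forall Om : 'M_p, \tr ((B - B^T) *m Om) = 0.
    move=> Om.
    have tg : tangent_St X (X *m Gi *m (Om - Om^T)).
      rewrite /tangent_St !trmx_mul GiT linearB /= trmxK.
      rewrite -!mulmxA (mulmxA X^T X) -/G GiG mulmx1 mulmxA GGi mul1mx.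
      by rewrite -[Om^T - Om]opprB addNr.
    have := H _ tg.
    rewrite {1}UE keyM // -!scalemxAl mxtraceZ => /eqP; rewrite mulf_eq0 (negbTE b0) /= => /eqP.
    have -> : S^T *m Gi *m X^T *m (X *m Gi *m (Om - Om^T)) *m Gi = S^T *m Gi *m (Om - Om^T) *m Gi.
      by rewrite !mulmxA -(mulmxA _ X^T X) -/G -(mulmxA _ G) GGi mulmx1.
    rewrite mxtrace_mulC !mulmxA -/B mulmxBr linearB /= => /eqP; rewrite subr_eq0 => /eqP E.
    rewrite mulmxBl linearB /= E -mxtrace_tr trmx_mul trmxK.
    by rewrite mxtrace_mulC subrr.
  have BT : B^T = B by apply/esym/eqP; rewrite -subr_eq0; apply/eqP/tr_eq0.
  have SB : S^T = G *m B *m G by rewrite /B !mulmxA GGi mul1mx -!mulmxA -/G GiG mulmx1.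
  by rewrite {1}SB -[RHS]trmxK SB (trmx_mul (G *m B) G) (trmx_mul G B) BT GT mulmxA.
- case=> S [ST ->] xi tg.
  rewrite keyM // -!scalemxAl mxtraceZ.
  apply/eqP; rewrite mulf_eq0; apply/orP; right.
  set A := Gi *m S *m Gi.
  have E : \tr (S^T *m Gi *m X^T *m xi *m Gi) = \tr (A *m (X^T *m xi)).
    by rewrite mxtrace_mulC ST /A !mulmxA.
  rewrite E.
  have E2 : X^T *m xi = - (xi^T *m X) by apply/eqP; rewrite -addr_eq0 addrC; apply/eqP.
  have AT : A^T = A by rewrite /A !trmx_mul GiT ST mulmxA.
  have E3 : \tr (A *m (xi^T *m X)) = \tr (A *m (X^T *m xi)).
    by rewrite -mxtrace_tr (trmx_mul A) (trmx_mul xi^T) trmxK AT mxtrace_mulC.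
  have Ht : \tr (A *m (X^T *m xi)) = - \tr (A *m (X^T *m xi)).
    by rewrite {1}E2 mulmxN linearN /= E3.
  have : \tr (A *m (X^T *m xi)) *+ 2 == 0 by rewrite mulr2n {1}Ht addNr.
  by rewrite mulrn_eq0.
Qed.
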